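(* For every integer $n\geq 1$, $$c_n(231,213 : 231)=c_n(312,132 : 312)=\begin{cases}k^2+1 & \text{if } n=2k,\\ k^2+k+1 & \text{if } n=2k+1.\end{cases}$$
   Context: $S_n$ is the symmetric group on $[n]=\{1,\dots,n\}$, and a permutation $\pi\in S_n$ is written in one-line notation $\pi=\pi_1\pi_2\cdots\pi_n$ with $\pi_i=\pi(i)$. For $\tau\in S_k$, $k\le n$, $\pi$ contains $\tau$ if there are indices $i_1<\dots<i_k$ with $\pi_{i_s}>\pi_{i_t}$ iff $\tau_s>\tau_t$ for all $1\le s<t\le k$; otherwise $\pi$ avoids $\tau$. $\pi^2$ denotes the composition $\pi\circ\pi$. For patterns $\sigma_1,\sigma_2,\rho$, $c_n(\sigma_1,\sigma_2 : \rho)$ denotes the number of permutations $\pi\in S_n$ such that $\pi$ avoids both $\sigma_1$ and $\sigma_2$ and $\pi^2$ avoids $\rho$. *)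

(* Defs.v *)
From mathcomp Require Import all_boot all_fingroup.
Set Implicit Arguments. Unset Strict Implicit. Unset Printing Implicit Defensive.

(* Permutations of [n] are represented by 'S_n = {perm 'I_n} (values 0..n-1,
   i.e. everything shifted down by one, which does not affect pattern
   containment).  One-line notation: pi_i = pi i. *)

Definition containsb (n : nat) (pi : 'S_n) (tau : seq nat) : bool :=
  [exists idx : {ffun 'I_(size tau) -> 'I_n},
    [forall s : 'I_(size tau), forall t : 'I_(size tau),
      (s < t) ==> ((idx s < idx t) &&
                   ((pi (idx s) > pi (idx t)) == (nth 0 tau t < nth 0 tau s)))]].

Definition avoidsb (n : nat) (pi : 'S_n) (tau : seq nat) : bool :=
  ~~ containsb pi tau.

Definition c_count (n : nat) (s1 s2 rho : seq nat) : nat :=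
  #|[set pi : 'S_n | avoidsb pi s1 && avoidsb pi s2 && avoidsb (pi * pi)%g rho]|.

(* Main.v *)
From mathcomp Require Import zify.
Require Import Defs.
From mathcomp Require Import all_boot all_fingroup.
Set Implicit Arguments. Unset Strict Implicit. Unset Printing Implicit Defensive.

Definition g (m j i : nat) : nat :=
  if i < j then (m - j) + i else if i < m then m - 1 - i else i.
Definition g2 (m j i : nat) : nat :=
  if i < j then j - 1 - i else if i < m - j then i
  else if i < m then (m - j) + m - 1 - i else i.
Definition okp (m j : nat) : bool :=
  ((m == 0) && (j == 0)) || ((0 < j) && (j <= m./2)).

Ltac splitifs := repeat (case: ifPn => ?).

Lemma ok_le m j : okp m j -> j <= m.
Proof. rewrite /okp; lia. Qed.

Lemma gg2 m j i : okp m j -> g m j (g m j i) = g2 m j i.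
Proof. move=> H; move Ex: (g m j i) => x; move: Ex H; rewrite /okp /g2 /g. splitifs; lia. Qed.

Lemma g_av312 m j i k l : okp m j -> i < k -> k < l ->
  ~ (g m j k < g m j l < g m j i).
Proof. rewrite /okp /g => H ? ?. splitifs; lia. Qed.

Lemma g_av132 m j i k l : okp m j -> i < k -> k < l ->
  ~ (g m j i < g m j l < g m j k).
Proof. rewrite /okp /g => H ? ?. splitifs; lia. Qed.

Lemma g2_av312 m j i k l : okp m j -> i < k -> k < l ->
  ~ (g2 m j k < g2 m j l < g2 m j i).
Proof. rewrite /okp /g2 => H ? ?. splitifs; lia. Qed.

Lemma g_inj m j m' j' n : okp m j -> okp m' j' -> m <= n -> m' <= n ->
  (forall i, i < n -> g m j i = g m' j' i) -> m = m' /\ j = j'.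
Proof.
move=> H H' Hm Hm' E.
have := E 0; have := E j; have := E j'.
rewrite /okp /g in H H' *. splitifs; lia.
Qed.

Definition av312 n (F : nat -> nat) := forall i k l, i < k -> k < l -> l < n -> ~ (F k < F l < F i).
Definition av132 n (F : nat -> nat) := forall i k l, i < k -> k < l -> l < n -> ~ (F i < F l < F k).
Definition bijon n (F : nat -> nat) :=
  [/\ (forall i, i < n -> F i < n),
      (forall i k, i < n -> k < n -> F i = F k -> i = k)
    & (forall x, x < n -> exists2 l, l < n & F l = x)].
Definition good n F := [/\ bijon n F, av132 n F, av312 n F & av312 n (fun x => F (F x))].

Lemma block n F : good n.+1 F -> F n = 0 -> 0 < n ->
  exists2 r, r < F 0 /\ F 0 + r = n &
    forall i, i <= n -> F i = (if i <= r then F 0 + i else n - i).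
Proof.
move=> [[Hr Hi Hs] H132 H312 HQ] Hn n0.
have v0 : 0 < F 0.
  rewrite lt0n; apply/eqP => E.
  have := Hi 0 n isT (ltnSn n); rewrite E Hn => /(_ erefl); lia.
have vn : F 0 <= n by have := Hr 0 isT; lia.
have Fnv : forall i, 0 < i -> i <= n -> F i <> F 0.
  move=> i i0 iN E; have := Hi i 0; rewrite ltnS => /(_ iN isT E); lia.
have F1 : forall i k, 0 < i -> i < k -> k <= n -> F 0 < F i -> F 0 < F k -> F i < F k.
  move=> i k i0 ik kn vi vk.
  case: (ltngtP (F i) (F k)) => // E.
  - by exfalso; apply: (H132 0 i k) => //; lia.
  - by have := Hi i k; rewrite !ltnS => /(_ (ltnW (leq_trans ik kn)) kn E); lia.
have F2 : forall i k, 0 < i -> i < k -> k <= n -> F i < F 0 -> F k < F 0 -> F k < F i.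
  move=> i k i0 ik kn vi vk.
  case: (ltngtP (F i) (F k)) => // E.
  - by exfalso; apply: (H312 0 i k) => //; lia.
  - by have := Hi i k; rewrite !ltnS => /(_ (ltnW (leq_trans ik kn)) kn E); lia.
have S : forall x, x <= n -> exists2 l, l <= n & F l = x.
  by move=> x xn; have [l ln Fl] := Hs x xn; exists l.
have Rn : forall i, i <= n -> F i <= n by move=> i iN; have := Hr i iN.
have Inj : forall i k, i <= n -> k <= n -> F i = F k -> i = k by move=> i k; apply: Hi.
have L1 : forall x, F 0 <= x -> x <= n -> F x < F 0.
  have [q qn Fq] := S n (leqnn n).
  have qn' : q < n.
    rewrite ltn_neqAle qn andbT; apply/eqP => E; move: Fq; rewrite E Hn; lia.
  have QA : forall a, a < q -> F (F a) <= F 0.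
    move=> a aq; rewrite leqNgt; apply/negP => H.
    apply: (HQ a q n) => //; rewrite Fq Hn; lia.
  move=> x vx xn.
  case: (ltngtP x n) => [xn'||->]; last by rewrite Hn.
  - have [a an Fa] := S x xn.
    have aq : a < q.
      case: (ltngtP a q) => // E.
      + case: (posnP q) => q0.
          by move: Fq; rewrite q0 => Fq; lia.
        have a0 : 0 < a by lia.
        have va : F 0 < F a.
          rewrite Fa ltn_neqAle vx andbT; apply/eqP => E'.
          by apply: (Fnv a a0 an); rewrite Fa.
        have := F1 q a q0 E an; rewrite Fq Fa; lia.
      + by move: Fa; rewrite E Fq; lia.
    have := QA a aq; rewrite Fa => H.
    have : F x <> F 0 by apply: Fnv; lia.
    lia.
  - lia.
have L2 : forall B, 0 < B -> (forall x, B <= x -> x <= n -> F x < F 0) ->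
    forall k, B + k <= n -> F (n - k) = k.
  move=> B B0 HB; elim=> [|k IH] Hk; first by rewrite subn0.
  have IH' := IH ltac:(lia).
  have Dp : F (n - k.+1) < F 0 by apply: HB; lia.
  have Dp1 : F (n - k) < F 0 by apply: HB; lia.
  have lt1 : k < F (n - k.+1).
    have := F2 (n - k.+1) (n - k); rewrite IH'; apply; lia.
  case: (ltngtP (F (n - k.+1)) k.+1) => //; first lia.
  move=> gt1; exfalso.
  have [l ln Fl] := S k.+1 ltac:(lia).
  have l0 : 0 < l by case: (posnP l) => l0; [move: Fl; rewrite l0; lia | done].
  have Dl : F l < F 0 by lia.
  case: (ltngtP l (n - k.+1)) => E1.
  - by have := F2 l (n - k.+1) l0 E1 ltac:(lia) Dl Dp; lia.
  - case: (ltngtP l (n - k)) => E2.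
    + lia.
    + by have := F2 (n - k) l ltac:(lia) E2 ln Dp1 Dl; lia.
    + by move: Fl; rewrite E2 IH'; lia.
  - by move: Fl; rewrite E1; lia.
set v := F 0 in v0 vn Fnv F1 F2 L1 L2 *.
set r := n - v.
have Hrv : r < v.
  have := L2 v v0 L1 r ltac:(rewrite /r; lia).
  rewrite (_ : n - r = v); last by rewrite /r; lia.
  move=> E; have := L1 v (leqnn v) vn; lia.
have Ua : forall p, p <= n.+1 -> (forall t, 0 < t -> t < p -> v < F t) ->
    forall t, t < p -> F t = v + t.
  move=> p pn Hp.
  suff H : forall t, t < p -> forall s, s <= t -> F s = v + s.
    by move=> t tp; apply: (H t tp).
  elim=> [|t IH] tp s st.
    by move: st; rewrite leqn0 => /eqP ->; rewrite addn0.
  case: (ltngtP s t.+1) => E; first by apply: IH; lia.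
    lia.
  rewrite E.
  have IHt := IH (ltnW tp).
  have vt : v < F t.+1 by apply: Hp.
  case: (ltngtP (F t.+1) (v + t.+1)) => // E2.
  - exfalso.
    have := Inj t.+1 (F t.+1 - v) ltac:(lia) ltac:(lia).
    rewrite (IHt (F t.+1 - v)); last by lia.
    rewrite subnKC; last by lia.
    by move/(_ erefl); lia.
  - exfalso.
    have [l ln Fl] := S (v + t.+1) ltac:(have := Rn t.+1 ltac:(lia); lia).
    case: (leqP l t) => lt.
      by move: Fl; rewrite (IHt l lt); lia.
    case: (ltngtP l t.+1) => E3; [lia | | by move: Fl; rewrite E3; lia].
    by apply: (H132 0 t.+1 l) => //; rewrite Fl; lia.
have L3 : forall i, 0 < i -> i <= r -> v < F i.
  move=> i i0 ir; rewrite ltnNge; apply/negP => Hle.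
  have Fi : F i < v by have := Fnv i i0 ltac:(lia); lia.
  have exP : exists p, (0 < p) && (p <= r) && (F p < v).
    by exists i; rewrite i0 ir Fi.
  case: (ex_minnP exP) => p /andP[/andP[p0 pr] Fp] pmin.
  have Up : forall t, 0 < t -> t < p -> v < F t.
    move=> t t0 tp.
    case: (ltngtP v (F t)) => // E.
    - have := pmin t; rewrite t0 E (ltac:(lia) : t <= r) => /(_ isT); lia.
    - by exfalso; apply: (Fnv t t0 ltac:(lia)).
  have Ap := Ua p ltac:(lia) Up.
  have [q qn Fq] := S n (leqnn n).
  have pq : p < q.
    case: (ltngtP p q) => // E.
    - by move: Fq; rewrite (Ap q E); lia.
    - by move: Fq; rewrite -E; lia.
  have [a an Fa] := S q qn.
  have Fb : F (n - p) = p by apply: (L2 v v0 L1 p); lia.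
  have ab : a < n - p.
    rewrite ltnNge; apply/negP => E.
    have := L2 v v0 L1 (n - a) ltac:(lia).
    rewrite (_ : n - (n - a) = a); last by lia.
    rewrite Fa; lia.
  apply: (HQ a (n - p) n) => //; try lia.
  rewrite Fa Fb Fq Hn; lia.
have Aall := Ua r.+1 ltac:(lia) (fun t t0 tr => L3 t t0 ltac:(lia)).
have Dr : forall x, r < x -> x <= n -> F x < v.
  move=> x rx xn.
  case: (ltngtP v (F x)) => E.
  - exfalso. case: (posnP r) => r0.
      by have := Rn x xn; rewrite /r in r0; lia.
    have := F1 r x r0 rx xn ltac:(rewrite (Aall r (ltnSn r)); lia) E.
    rewrite (Aall r (ltnSn r)); have := Rn x xn; rewrite /r; lia.
  - done.
  - by exfalso; apply: (Fnv x); lia.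
have L2r := L2 r.+1 isT Dr.
exists r; first by split => //; rewrite /r; lia.
move=> i iN; case: ifP => ir.
  by apply: Aall; lia.
rewrite -{1}(_ : n - (n - i) = i); last by lia.
by apply: L2r; lia.
Qed.

Lemma lastval n F : good n.+1 F -> F n = 0 \/ F n = n.
Proof.
move=> [[Hr Hi Hs] H132 H312 HQ].
case: (ltngtP (F n) (F 0)) => E.
- left. case: (posnP (F n)) => // Fn0.
  have [l ln Fl] := Hs 0 isT.
  case: (posnP l) => l0. by move: Fl; rewrite l0; lia.
  case: (ltngtP l n) => E2.
  + by exfalso; apply: (H312 0 l n) => //; lia.
  + lia.
  + by rewrite -E2.
- right. case: (eqVneq (F n) n) => // Fnn.
  have [l ln Fl] := Hs n (ltnSn n).
  have := Hr n (ltnSn n) => Fr.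
  case: (ltngtP l n) => E2; [|lia|by move: Fl; rewrite E2].
  case: (posnP l) => l0. by move: Fl; rewrite l0; lia.
  by exfalso; apply: (H132 0 l n) => //; lia.
- have En := Hi n 0 (ltnSn n) isT E; subst n.
  by left; have := Hr 0 isT; lia.
Qed.

Lemma char n F : good n F ->
  exists m j, [/\ okp m j, m <= n & forall i, i < n -> F i = g m j i].
Proof.
elim: n F => [|n IH] F Hg.
  by exists 0, 0; split.
have [[Hr Hi Hs] H132 H312 HQ] := Hg.
case: (eqVneq (F n) n) => Fn.
- have Hg' : good n F.
    split; [split| | |].
    + move=> i ilt; have := Hr i (ltnW ilt); rewrite ltnS leq_eqVlt => /orP[/eqP E|//].
      have := Hi i n (ltnW ilt) (ltnSn n); rewrite E Fn => /(_ erefl); lia.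
    + by move=> i k ilt klt; apply: Hi; apply: ltnW.
    + move=> x xn; have [l ln Fl] := Hs x (ltnW xn).
      exists l => //; move: ln; rewrite ltnS leq_eqVlt => /orP[/eqP E|//].
      by move: Fl; rewrite E Fn; lia.
    + by move=> i k l ik kl ln; apply: H132 => //; apply: ltnW.
    + by move=> i k l ik kl ln; apply: H312 => //; apply: ltnW.
    + by move=> i k l ik kl ln; apply: HQ => //; apply: ltnW.
  have [m [j [ok mn Hf]]] := IH F Hg'.
  exists m, j; split => //; first by apply: leqW.
  move=> i; rewrite ltnS leq_eqVlt => /orP[/eqP ->|/Hf //].
  rewrite Fn /g; have := ok_le ok; case: ifPn; first lia.
  by case: ifPn; lia.
- have Fn0 : F n = 0 by case: (lastval Hg) => // E; move: Fn; rewrite E eqxx.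
  have n0 : 0 < n by move: Fn; rewrite Fn0; lia.
  have [r [rv vr] Hf] := block Hg Fn0 n0.
  exists n.+1, r.+1; split => //.
    by rewrite /okp; apply/orP; right; lia.
  move=> i; rewrite ltnS => iN; rewrite Hf // /g.
  splitifs; lia.
Qed.

Lemma contains3 n (p : 'S_n) a b c :
  containsb p [:: a; b; c] =
  [exists i : 'I_n, exists k : 'I_n, exists l : 'I_n,
    [&& i < k, k < l, (p k < p i) == (b < a), (p l < p i) == (c < a)
      & (p l < p k) == (c < b)]].
Proof.
rewrite /containsb; apply/existsP/existsP => [[idx /forallP H]|[i /existsP[k /existsP[l /and5P[ik kl H1 H2 H3]]]]].
- have H01 := forallP (H (@Ordinal 3 0 isT)) (@Ordinal 3 1 isT).
  have H02 := forallP (H (@Ordinal 3 0 isT)) (@Ordinal 3 2 isT).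
  have H12 := forallP (H (@Ordinal 3 1 isT)) (@Ordinal 3 2 isT).
  move: H01 H02 H12 => /= /andP[ik E1] /andP[_ E2] /andP[kl E3].
  exists (idx (@Ordinal 3 0 isT)); apply/existsP; exists (idx (@Ordinal 3 1 isT)).
  apply/existsP; exists (idx (@Ordinal 3 2 isT)).
  by rewrite ik kl E1 E2 E3.
- exists [ffun s : 'I_3 => nth i [:: i; k; l] s].
  apply/forallP => -[[|[|[|s]]] Hs] //; apply/forallP => -[[|[|[|t]]] Ht] //=;
    rewrite !ffunE /= ?ik ?kl ?H1 ?H2 ?H3 //= (ltn_trans ik kl) //.
Qed.

Definition av231 n (F : nat -> nat) := forall i k l, i < k -> k < l -> l < n -> ~ (F l < F i < F k).
Definition av213 n (F : nat -> nat) := forall i k l, i < k -> k < l -> l < n -> ~ (F k < F i < F l).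

Lemma avoid3P n (s : 'S_n) (F : nat -> nat) a b c :
  (forall o : 'I_n, (s o : nat) = F o) ->
  avoidsb s [:: a; b; c] <-> (forall i k l, i < k -> k < l -> l < n ->
     ~ [/\ (F k < F i) = (b < a), (F l < F i) = (c < a) & (F l < F k) = (c < b)]).
Proof.
move=> HF; rewrite /avoidsb contains3; split.
- move=> /existsPn H i k l ik kl ln [E1 E2 E3].
  have kn := ltn_trans kl ln; have iN := ltn_trans ik kn.
  move: (H (Ordinal iN)) => /existsPn /(_ (Ordinal kn)) /existsPn /(_ (Ordinal ln)).
  by rewrite /= !HF /= ik kl E1 E2 E3 !eqxx.
- move=> H; apply/existsPn => i; apply/existsPn => k; apply/existsPn => l.
  apply/negP => /and5P[ik kl /eqP E1 /eqP E2 /eqP E3].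
  by apply: (H i k l ik kl (ltn_ord l)); rewrite -!HF.
Qed.

Lemma HFinj n (s : 'S_n) (F : nat -> nat) : (forall o : 'I_n, (s o : nat) = F o) ->
  forall i k, i < n -> k < n -> F i = F k -> i = k.
Proof.
move=> HF i k iN kN E.
have := HF (Ordinal iN); have := HF (Ordinal kN); rewrite /= -E => <- /val_inj /perm_inj.
by move=> [].
Qed.

Lemma av312P n (s : 'S_n) (F : nat -> nat) : (forall o : 'I_n, (s o : nat) = F o) ->
  avoidsb s [:: 3; 1; 2] <-> av312 n F.
Proof.
move=> HF; have Hi := HFinj HF.
  rewrite (avoid3P _ _ _ HF); split=> H i k l ik kl ln.
  - move=> ?; apply: (H i k l ik kl ln); split; lia.
  - move=> [E1 E2 E3]; apply: (H i k l ik kl ln).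
    have := Hi i k; have := Hi i l; have := Hi k l; lia.
Qed.
Lemma av132P n (s : 'S_n) (F : nat -> nat) : (forall o : 'I_n, (s o : nat) = F o) ->
  avoidsb s [:: 1; 3; 2] <-> av132 n F.
Proof.
move=> HF; have Hi := HFinj HF.
  rewrite (avoid3P _ _ _ HF); split=> H i k l ik kl ln.
  - move=> ?; apply: (H i k l ik kl ln); split; lia.
  - move=> [E1 E2 E3]; apply: (H i k l ik kl ln).
    have := Hi i k; have := Hi i l; have := Hi k l; lia.
Qed.
Lemma av231P n (s : 'S_n) (F : nat -> nat) : (forall o : 'I_n, (s o : nat) = F o) ->
  avoidsb s [:: 2; 3; 1] <-> av231 n F.
Proof.
move=> HF; have Hi := HFinj HF.
  rewrite (avoid3P _ _ _ HF); split=> H i k l ik kl ln.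
  - move=> ?; apply: (H i k l ik kl ln); split; lia.
  - move=> [E1 E2 E3]; apply: (H i k l ik kl ln).
    have := Hi i k; have := Hi i l; have := Hi k l; lia.
Qed.
Lemma av213P n (s : 'S_n) (F : nat -> nat) : (forall o : 'I_n, (s o : nat) = F o) ->
  avoidsb s [:: 2; 1; 3] <-> av213 n F.
Proof.
move=> HF; have Hi := HFinj HF.
  rewrite (avoid3P _ _ _ HF); split=> H i k l ik kl ln.
  - move=> ?; apply: (H i k l ik kl ln); split; lia.
  - move=> [E1 E2 E3]; apply: (H i k l ik kl ln).
    have := Hi i k; have := Hi i l; have := Hi k l; lia.
Qed.

Definition Fof n (s : 'S_n) (x : nat) : nat :=
  if (insub x : option 'I_n) is Some o then nat_of_ord (s o) else x.
Lemma FofE n (s : 'S_n) (o : 'I_n) : (s o : nat) = Fof s o.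
Proof. by rewrite /Fof valK. Qed.
Lemma FofR n (s : 'S_n) i : i < n -> Fof s i < n.
Proof. by move=> iN; rewrite (_ : i = Ordinal iN) // -FofE. Qed.
Lemma FofE2 n (s : 'S_n) (o : 'I_n) : ((s * s)%g o : nat) = Fof s (Fof s o).
Proof. by rewrite permM -!FofE. Qed.

Definition rcF n (F : nat -> nat) x := n - (F (n - x.+1)).+1.

Lemma rc312 n F : (forall i, i < n -> F i < n) -> av312 n (rcF n F) <-> av231 n F.
Proof.
rewrite /av312 /av231 /rcF => R; split => H i k l ik kl ln.
- have := H (n - l.+1) (n - k.+1) (n - i.+1) ltac:(lia) ltac:(lia) ltac:(lia).
  rewrite (_ : n - (n - l.+1).+1 = l); last lia.
  rewrite (_ : n - (n - k.+1).+1 = k); last lia.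
  rewrite (_ : n - (n - i.+1).+1 = i); last lia.
  have := R i ltac:(lia); have := R k ltac:(lia); have := R l ltac:(lia); lia.
- have := H (n - l.+1) (n - k.+1) (n - i.+1) ltac:(lia) ltac:(lia) ltac:(lia).
  have := R (n - l.+1) ltac:(lia); have := R (n - k.+1) ltac:(lia);
  have := R (n - i.+1) ltac:(lia); lia.
Qed.

Lemma rc132 n F : (forall i, i < n -> F i < n) -> av132 n (rcF n F) <-> av213 n F.
Proof.
rewrite /av132 /av213 /rcF => R; split => H i k l ik kl ln.
- have := H (n - l.+1) (n - k.+1) (n - i.+1) ltac:(lia) ltac:(lia) ltac:(lia).
  rewrite (_ : n - (n - l.+1).+1 = l); last lia.
  rewrite (_ : n - (n - k.+1).+1 = k); last lia.
  rewrite (_ : n - (n - i.+1).+1 = i); last lia.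
  have := R i ltac:(lia); have := R k ltac:(lia); have := R l ltac:(lia); lia.
- have := H (n - l.+1) (n - k.+1) (n - i.+1) ltac:(lia) ltac:(lia) ltac:(lia).
  have := R (n - l.+1) ltac:(lia); have := R (n - k.+1) ltac:(lia);
  have := R (n - i.+1) ltac:(lia); lia.
Qed.

Definition rv n : 'S_n := perm (@rev_ord_inj n).
Definition cj n (s : 'S_n) : 'S_n := (rv n * s * rv n)%g.

Lemma cjF n (s : 'S_n) (F : nat -> nat) : (forall o : 'I_n, (s o : nat) = F o) ->
  forall o : 'I_n, (cj s o : nat) = rcF n F o.
Proof. by move=> HF o; rewrite /cj !permM !permE /= HF. Qed.

Lemma cjM n (s : 'S_n) : (cj s * cj s)%g = cj (s * s)%g.
Proof. by apply/permP => x; rewrite /cj !permM !permE rev_ordK. Qed.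

Lemma cj_inj n : injective (@cj n).
Proof.
move=> s t E; apply/permP => x.
have := congr1 (fun p : 'S_n => p (rev_ord x)) E.
by rewrite /cj !permM !permE rev_ordK => /rev_ord_inj.
Qed.

Lemma first_eq n : c_count n [:: 2; 3; 1] [:: 2; 1; 3] [:: 2; 3; 1] =
                   c_count n [:: 3; 1; 2] [:: 1; 3; 2] [:: 3; 1; 2].
Proof.
rewrite /c_count -[in RHS](card_preimset _ (@cj_inj n)); apply: eq_card => s.
rewrite !inE.
set F := Fof s.
have HF : forall o : 'I_n, (s o : nat) = F o by move=> o; rewrite FofE.
have HF2 : forall o : 'I_n, ((s * s)%g o : nat) = (fun x => F (F x)) o.
  by move=> o; rewrite FofE2.
have R : forall i, i < n -> F i < n by move=> i; apply: FofR.
have R2 : forall i, i < n -> (fun x => F (F x)) i < n by move=> i iN; apply/R/R.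
have Hc := cjF HF.
have Hc2 : forall o : 'I_n, ((cj s * cj s)%g o : nat) = rcF n (fun x => F (F x)) o.
  by rewrite cjM; apply: cjF.
have e1 : avoidsb s [:: 2; 3; 1] = avoidsb (cj s) [:: 3; 1; 2].
  apply/idP/idP => H.
  - by apply/(av312P Hc)/(rc312 R)/(av231P HF).
  - by apply/(av231P HF)/(rc312 R)/(av312P Hc).
have e2 : avoidsb s [:: 2; 1; 3] = avoidsb (cj s) [:: 1; 3; 2].
  apply/idP/idP => H.
  - by apply/(av132P Hc)/(rc132 R)/(av213P HF).
  - by apply/(av213P HF)/(rc132 R)/(av132P Hc).
have e3 : avoidsb (s * s)%g [:: 2; 3; 1] = avoidsb (cj s * cj s)%g [:: 3; 1; 2].
  apply/idP/idP => H.
  - by apply/(@av312P _ _ (rcF n (fun x => F (F x))) Hc2)/(rc312 R2)/(@av231P _ _ (fun x => F (F x)) HF2).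
  - by apply/(@av231P _ _ (fun x => F (F x)) HF2)/(rc312 R2)/(@av312P _ _ (rcF n (fun x => F (F x))) Hc2).
by rewrite e1 e2 e3.
Qed.

Definition gg n m j i := if (m <= n) && (j <= m) then g m j i else i.
Lemma gg_lt n m j i : i < n -> gg n m j i < n.
Proof. rewrite /gg /g => iN; splitifs; lia. Qed.
Lemma gg_inj n m j i k : i < n -> k < n -> gg n m j i = gg n m j k -> i = k.
Proof. rewrite /gg /g => iN kN; splitifs; lia. Qed.
Definition gf n m j (i : 'I_n) : 'I_n := Ordinal (@gg_lt n m j i (ltn_ord i)).
Arguments gf : clear implicits.
Lemma gf_inj n m j : injective (gf n m j).
Proof. move=> a b /(congr1 val) /= /gg_inj E; apply: val_inj; exact: E. Qed.
Definition gperm n m j : 'S_n := perm (@gf_inj n m j).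
Arguments gperm : clear implicits.
Lemma gpermE n m j (o : 'I_n) : (gperm n m j o : nat) = gg n m j o.
Proof. by rewrite permE. Qed.
Lemma gg_g n m j i : okp m j -> m <= n -> gg n m j i = g m j i.
Proof. by move=> ok mn; rewrite /gg mn (ok_le ok). Qed.

Definition Tset n := [set x : 'I_n.+1 * 'I_n.+1 | okp x.1 x.2].
Definition Psi n (x : 'I_n.+1 * 'I_n.+1) : 'S_n := gperm n x.1 x.2.

Lemma Psi_inj n : {in Tset n &, injective (@Psi n)}.
Proof.
move=> [m j] [m' j']; rewrite !inE /= => ok ok' E.
have mn : (m : nat) <= n by have := ltn_ord m.
have mn' : (m' : nat) <= n by have := ltn_ord m'.
have H : forall i, i < n -> g m j i = g m' j' i.
  move=> i iN; have := congr1 (fun p : 'S_n => (p (Ordinal iN) : nat)) E.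
  by rewrite /Psi /= !gpermE !gg_g.
have [e1 e2] := g_inj ok ok' mn mn' H.
by congr pair; apply: val_inj.
Qed.

Lemma count_valid n : c_count n [:: 3; 1; 2] [:: 1; 3; 2] [:: 3; 1; 2] = #|Tset n|.
Proof.
rewrite /c_count -(card_in_imset (@Psi_inj n)); apply: eq_card => s.
rewrite inE; apply/idP/imsetP.
- move=> /andP[/andP[A1 A2] A3].
  set F := Fof s.
  have HF : forall o : 'I_n, (s o : nat) = F o by move=> o; rewrite FofE.
  have HF2 : forall o : 'I_n, ((s * s)%g o : nat) = (fun x => F (F x)) o.
    by move=> o; rewrite FofE2.
  have Hg : good n F.
    split; [split| | |].
    + by move=> i; apply: FofR.
    + exact: HFinj HF.
    + move=> x xn; exists ((s^-1)%g (Ordinal xn)) => //.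
      by rewrite -HF permKV.
    + exact/(av132P HF).
    + exact/(av312P HF).
    + exact/(@av312P _ _ (fun x => F (F x)) HF2).
  have [m [j [ok mn Hf]]] := char Hg.
  have jm := ok_le ok.
  exists (inord m, inord j).
    by rewrite inE /= !inordK //; lia.
  apply/permP => o; apply/val_inj.
  by rewrite /Psi /= gpermE !inordK ?gg_g ?HF ?Hf //; lia.
- move=> [[m j]]; rewrite inE /= => ok ->.
  have mn : (m : nat) <= n by have := ltn_ord m.
  have HG : forall o : 'I_n, (gperm n m j o : nat) = g m j o.
    by move=> o; rewrite gpermE gg_g.
  have HG2 : forall o : 'I_n, ((gperm n m j * gperm n m j)%g o : nat) = g2 m j o.
    by move=> o; rewrite permM HG HG gg2.
  rewrite /Psi /=.
  apply/andP; split; [apply/andP; split|].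
  + by apply/(av312P HG) => i k l ik kl ln; apply: g_av312.
  + by apply/(av132P HG) => i k l ik kl ln; apply: g_av132.
  + by apply/(av312P HG2) => i k l ik kl ln; apply: g2_av312.
Qed.

Lemma sum_ind N K : \sum_(j < N.+1) nat_of_bool ((0 < j) && (j <= K)) = minn K N.
Proof.
elim: N => [|N IH]; first by rewrite big_ord_recr big_ord0.
rewrite big_ord_recr IH /=; lia.
Qed.

Lemma sum_eq0 N : \sum_(j < N.+1) nat_of_bool ((j : nat) == 0) = 1.
Proof. by rewrite big_ord_recl big1. Qed.

Lemma card_T n : #|Tset n| = 1 + \sum_(m < n.+1) m./2.
Proof.
rewrite -sum1_card big_mkcond /=.
rewrite (eq_bigr (fun p : 'I_n.+1 * 'I_n.+1 => nat_of_bool (okp p.1 p.2))); last first.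
  by move=> p _; rewrite inE; case: okp.
rewrite -(pair_big predT predT (fun (m j : 'I_n.+1) => nat_of_bool (okp m j))) /=.
rewrite (eq_bigr (fun m : 'I_n.+1 => nat_of_bool ((m : nat) == 0) + (m : nat)./2)).
  by rewrite big_split /= sum_eq0.
move=> m _.
rewrite (eq_bigr (fun j : 'I_n.+1 => nat_of_bool (((m : nat) == 0) && ((j : nat) == 0))
    + nat_of_bool ((0 < j) && (j <= m./2)))); last first.
  by move=> j _; rewrite /okp; case: (m : nat) => [|mm]; case: (j : nat) => [|jj].
rewrite big_split /= sum_ind.
have mn : (m : nat) <= n by have := ltn_ord m.
rewrite (_ : minn (m./2) n = m./2); last by lia.
congr (_ + _).
case: (eqVneq (m : nat) 0) => m0 /=; first exact: sum_eq0.
by rewrite big1.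
Qed.

Lemma S_closed n : \sum_(m < n.+1) m./2 = n./2 ^ 2 + odd n * n./2.
Proof.
elim: n => [|n IH]; first by rewrite big_ord_recr big_ord0.
rewrite big_ord_recr /= IH uphalf_half.
case: (odd n) => /=; move: (n./2) => k; rewrite !expnS !expn0; lia.
Qed.

Theorem theorem3p5 (n : nat) : 1 <= n ->
  c_count n [:: 2; 3; 1] [:: 2; 1; 3] [:: 2; 3; 1] =
    c_count n [:: 3; 1; 2] [:: 1; 3; 2] [:: 3; 1; 2] /\
  c_count n [:: 3; 1; 2] [:: 1; 3; 2] [:: 3; 1; 2] =
    (if odd n then (n./2) ^ 2 + n./2 + 1 else (n./2) ^ 2 + 1).
Proof.
move=> _; split; first exact: first_eq.
by rewrite count_valid card_T S_closed; case: (odd n) => /=; lia.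
Qed.
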